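(* For each of the following groups $G$ of order $36$ there exists a $(G,[3,9,24],18)$ Hadamard partitioned difference family: $\mathbb{Z}_6\times\mathbb{Z}_6$, $\mathbb{Z}_3\times\mathbb{Z}_{12}$, $\mathbb{Z}_3\times Q_{12}$, $D_6\times D_6$, $\mathbb{Z}_6\times D_6$.
   Context: For a finite group $G$ (difference of $x$ and $y$ being $x-y$ additively, or $xy^{-1}$ multiplicatively) and $B\subseteq G$, $\Delta B$ is the multiset of differences of ordered pairs of distinct elements of $B$; for $\mathcal{F}=\{B_1,\dots,B_t\}$, $\Delta\mathcal{F}$ is the multiset union of the $\Delta B_i$. $\mathcal{F}$ is a $(G,[k_1,\dots,k_t],\lambda)$ partitioned difference family if the $B_i$ partition $G$, $|B_i|=k_i$, and $\Delta\mathcal{F}$ contains every non-identity element of $G$ exactly $\lambda$ times; it is Hadamard if $|G|=2\lambda$. $D_{2n}=\langle x,y\mid x^n=1,\ y^2=1,\ yx^i=x^{-i}y\rangle$ is the dihedral group of order $2n$ (so $D_6$ has order $6$), and $Q_{4n}=\langle x,y\mid x^{2n}=1,\ y^2=x^n,\ yx^i=x^{-i}y\rangle$ is the dicyclic group of order $4n$ (so $Q_{12}$ has order $12$). *)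

(* Defs.v *)
From HB Require Import structures.
From mathcomp Require Import all_boot all_order all_algebra all_fingroup.
From mathcomp Require Import ring.
Set Implicit Arguments. Unset Strict Implicit. Unset Printing Implicit Defensive.
Import GRing.Theory.

Local Open Scope group_scope.

(* The "difference" of x and y is x * y^-1 (multiplicative notation;  *)
(* for the additive groups 'Z_n this is x - y).                       *)

Definition diff_mult (gT : finGroupType) (B : {set gT}) (g : gT) : nat :=
  #|[set p : gT * gT | [&& p.1 \in B, p.2 \in B, p.1 != p.2 & p.1 * p.2^-1 == g]]|.

Definition is_pdf (gT : finGroupType) (G : {group gT}) (ks : seq nat) (lam : nat)
    (F : seq {set gT}) : Prop :=
  [/\ size F = size ks,
   [/\
      (forall i, i < size F -> nth set0 F i \subset G)%N,
      (forall i j, i < size F -> j < size F -> i != j ->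
         [disjoint nth set0 F i & nth set0 F j])%N &
      \bigcup_(B <- F) B = G],
      (forall i, i < size F -> #|nth set0 F i| = nth 0 ks i)%N &
      (forall g, g \in G -> g != 1%g -> (\sum_(B <- F) diff_mult B g)%N = lam)].

Definition is_hadamard_pdf (gT : finGroupType) (G : {group gT}) (ks : seq nat)
    (lam : nat) (F : seq {set gT}) : Prop :=
  is_pdf G ks lam F /\ #|G| = (2 * lam)%N.

(* Concrete groups.  The pair (i, a) : 'Z_m * bool stands for x^i y^a. *)
(* Multiplication:  x^i y^a * x^j y^b = x^(i + (-1)^a j + [a && b] c) y^(a xor b), *)
(* which realises <x, y | x^m = 1, y^2 = x^c, y x^i = x^-i y> when c + c = 0. *)
Section Metacyclic.
Local Open Scope ring_scope.
Variables (m : nat) (c : 'Z_m).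
Hypothesis c2 : c + c = 0.

Definition mc_mul (u v : 'Z_m * bool) : 'Z_m * bool :=
  (u.1 + (if u.2 then - v.1 else v.1) + (if u.2 && v.2 then c else 0), u.2 (+) v.2).
Definition mc_one : 'Z_m * bool := (0, false).
Definition mc_inv (u : 'Z_m * bool) : 'Z_m * bool :=
  if u.2 then (u.1 + c, true) else (- u.1, false).

Lemma cN : - c = c.
Proof. by apply/eqP; rewrite eq_sym -subr_eq0 opprK c2. Qed.

Lemma mc_mulA : associative mc_mul.
Proof.
move=> [i a] [j b] [k d]; rewrite /mc_mul /=.
case: a; case: b; case: d => /=; congr pair;
  rewrite ?opprD ?opprK ?cN; try ring.
Qed.

Lemma mc_mul1 : left_id mc_one mc_mul.
Proof. by move=> [i a]; rewrite /mc_mul /= add0r addr0. Qed.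

Lemma mc_mulV : left_inverse mc_one mc_inv mc_mul.
Proof.
move=> [i [|]]; rewrite /mc_mul /mc_inv /mc_one /=; congr pair.
  by rewrite -c2; ring.
by rewrite addr0 addNr.
Qed.
End Metacyclic.

Local Open Scope ring_scope.
Lemma c0_2 : (0 : 'Z_3) + 0 = 0. Proof. by rewrite addr0. Qed.
Lemma c3_2 : (3%:R : 'Z_6) + 3%:R = 0. Proof. by apply/val_inj. Qed.
Local Close Scope ring_scope.

Definition D6 : Type := ('Z_3 * bool)%type.
HB.instance Definition _ := Finite.copy D6 ('Z_3 * bool)%type.
HB.instance Definition _ :=
  Finite_isGroup.Build D6 (mc_mulA c0_2) (@mc_mul1 3 0%R) (mc_mulV c0_2).

Definition Q12 : Type := ('Z_6 * bool)%type.
HB.instance Definition _ := Finite.copy Q12 ('Z_6 * bool)%type.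
HB.instance Definition _ :=
  Finite_isGroup.Build Q12 (mc_mulA c3_2) (@mc_mul1 6 (3%:R)%R) (mc_mulV c3_2).

(* Main.v *)
Require Import Defs.
From HB Require Import structures.
From mathcomp Require Import all_boot all_order all_algebra all_fingroup.
Set Implicit Arguments. Unset Strict Implicit. Unset Printing Implicit Defensive.
Local Open Scope group_scope.

Section Gen.
Variable T : finGroupType.
Variable L : seq T.

Definition dl (s : seq T) : seq T :=
  [seq p.1 * p.2^-1 | p <- [seq (x, y) | x <- s, y <- s] & p.1 != p.2].
Definition dm (s : seq T) (g : T) : nat := count_mem g (dl s).

Lemma card_count (U : finType) (A : {pred U}) (LP : seq U) :
  uniq LP -> {subset A <= LP} -> #|A| = count (mem A) LP.
Proof.
move=> uLP cLP; rewrite -size_filter.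
rewrite -(card_uniqP (filter_uniq _ uLP)); apply: eq_card => x.
rewrite mem_filter; apply/idP/andP => [h|[]//]; split => //; exact: cLP.
Qed.

Hypothesis uL : uniq L.
Hypothesis cL : forall x, x \in L.

Lemma diff_multE (s : seq T) g : uniq s -> diff_mult [set x in s] g = dm s g.
Proof.
move=> us.
rewrite /diff_mult /dm /dl (@card_count _ _ [seq (x, y) | x <- s, y <- s]).
- rewrite count_map count_filter; apply: eq_in_count => -[x y] /allpairsP[[a b] /= [ha hb [-> ->]]].
  by rewrite !inE /= ha hb [RHS]andbC.
- by apply: allpairs_uniq => // -[x1 y1] [x2 y2].
- by case=> x y; rewrite !inE => /and4P[/= ha hb _ _]; exact: allpairs_f.
Qed.

Definition check (s1 s2 s3 : seq T) : bool :=
  [&& [&& uniq s1, uniq s2 & uniq s3], [&& size s1 == 3, size s2 == 9 & size s3 == 24],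
   [&& ~~ has (mem s2) s1, ~~ has (mem s3) s1 & ~~ has (mem s3) s2] & [&&
   all (fun x => (x \in s1) || (x \in s2) || (x \in s3)) L,
   size L == 36 &
   all (fun g => (g == 1%g) || (dm s1 g + (dm s2 g + (dm s3 g + 0)) == 18)%N) L]].

Lemma disj (s t : seq T) : ~~ has (mem t) s -> [disjoint [set x in s] & [set x in t]].
Proof.
move=> h; apply/pred0P => x /=; rewrite !inE; apply/negbTE/negP => /andP[a b].
by move/hasP: h; apply; exists x.
Qed.

Lemma checkP s1 s2 s3 : check s1 s2 s3 ->
  is_hadamard_pdf [set: T]%G [:: 3; 9; 24]%N 18 [:: [set x in s1]; [set x in s2]; [set x in s3]].
Proof.
case/and4P => /and3P[u1 u2 u3] /and3P[/eqP z1 /eqP z2 /eqP z3] /and3P[d12 d13 d23] /and3P[cov card df].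
split.
  split => //.
  - split.
    + by move=> i _; apply: subsetT.
    + have D12 := disj d12; have D13 := disj d13; have D23 := disj d23.
      move=> i j hi hj ne; move: hi hj ne.
      by case: i => [|[|[|i]]]; case: j => [|[|[|j]]]; rewrite //= ?(disjoint_sym [set x in s2]) ?(disjoint_sym [set x in s3]).
    + rewrite !big_cons big_nil setU0; apply/setP => x; rewrite !inE.
      by move/allP: cov => /(_ x (cL x)); rewrite orbA.
  - case=> [|[|[|//]]] _ /=; rewrite cardsE.
    + by rewrite (card_uniqP u1).
    + by rewrite (card_uniqP u2).
    + by rewrite (card_uniqP u3).
  - move=> g _ ng; rewrite !big_cons big_nil !diff_multE //.
    by move/allP: df => /(_ g (cL g)); rewrite (negbTE ng) => /eqP.
rewrite /= cardsT (@card_count _ _ L uL (fun x _ => cL x)) count_predT (eqP card) //.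
Qed.
End Gen.

Lemma allZ n (x : 'I_n.+1) : x \in [seq inZp i | i <- iota 0 n.+1].
Proof.
apply/mapP; exists (val x); first by rewrite mem_iota /= add0n ltn_ord.
by apply: val_inj; rewrite /= modn_small.
Qed.

Lemma allB (x : bool) : x \in [:: false; true].
Proof. by case: x. Qed.

Lemma allP2 (A B : eqType) (LA : seq A) (LB : seq B) :
  (forall x, x \in LA) -> (forall x, x \in LB) ->
  forall x : A * B, x \in [seq (a, b) | a <- LA, b <- LB].
Proof. by move=> hA hB [a b]; apply: allpairs_f. Qed.

Definition z6 (a : nat) : 'Z_6 := inZp a.
Definition z3 (a : nat) : 'Z_3 := inZp a.
Definition z12 (a : nat) : 'Z_12 := inZp a.
Definition d6 (a : nat) (b : bool) : D6 := (inZp a, b).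
Definition q12 (a : nat) (b : bool) : Q12 := (inZp a, b).

Definition L6 : seq 'Z_6 := [seq inZp i | i <- iota 0 6].
Definition L3 : seq 'Z_3 := [seq inZp i | i <- iota 0 3].
Definition L12 : seq 'Z_12 := [seq inZp i | i <- iota 0 12].
Definition LD6 : seq D6 := [seq (a, b) | a <- L3, b <- [:: false; true]].
Definition LQ12 : seq Q12 := [seq (a, b) | a <- L6, b <- [:: false; true]].
Lemma cL6 x : x \in L6. Proof. exact: allZ. Qed.
Lemma cL3 x : x \in L3. Proof. exact: allZ. Qed.
Lemma cL12 x : x \in L12. Proof. exact: allZ. Qed.
Lemma cLD6 x : x \in LD6. Proof. exact: allP2 cL3 allB x. Qed.
Lemma cLQ12 x : x \in LQ12. Proof. exact: allP2 cL6 allB x. Qed.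
Definition S1_z6z6 : seq ('Z_6 * 'Z_6) := [:: ((z6 0), (z6 0)); ((z6 2), (z6 0)); ((z6 4), (z6 0))].
Definition S2_z6z6 : seq ('Z_6 * 'Z_6) := [:: ((z6 0), (z6 5)); ((z6 1), (z6 2)); ((z6 2), (z6 1)); ((z6 3), (z6 0)); ((z6 3), (z6 1)); ((z6 3), (z6 3)); ((z6 3), (z6 5)); ((z6 4), (z6 3)); ((z6 5), (z6 4))].
Definition S3_z6z6 : seq ('Z_6 * 'Z_6) := [:: ((z6 0), (z6 1)); ((z6 0), (z6 2)); ((z6 0), (z6 3)); ((z6 0), (z6 4)); ((z6 1), (z6 0)); ((z6 1), (z6 1)); ((z6 1), (z6 3)); ((z6 1), (z6 4)); ((z6 1), (z6 5)); ((z6 2), (z6 2)); ((z6 2), (z6 3)); ((z6 2), (z6 4)); ((z6 2), (z6 5)); ((z6 3), (z6 2)); ((z6 3), (z6 4)); ((z6 4), (z6 1)); ((z6 4), (z6 2)); ((z6 4), (z6 4)); ((z6 4), (z6 5)); ((z6 5), (z6 0)); ((z6 5), (z6 1)); ((z6 5), (z6 2)); ((z6 5), (z6 3)); ((z6 5), (z6 5))].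
Definition S1_z3z12 : seq ('Z_3 * 'Z_12) := [:: ((z3 0), (z12 0)); ((z3 1), (z12 0)); ((z3 2), (z12 0))].
Definition S2_z3z12 : seq ('Z_3 * 'Z_12) := [:: ((z3 0), (z12 6)); ((z3 0), (z12 11)); ((z3 1), (z12 2)); ((z3 1), (z12 3)); ((z3 2), (z12 1)); ((z3 2), (z12 5)); ((z3 2), (z12 7)); ((z3 2), (z12 9)); ((z3 2), (z12 10))].
Definition S3_z3z12 : seq ('Z_3 * 'Z_12) := [:: ((z3 0), (z12 1)); ((z3 0), (z12 2)); ((z3 0), (z12 3)); ((z3 0), (z12 4)); ((z3 0), (z12 5)); ((z3 0), (z12 7)); ((z3 0), (z12 8)); ((z3 0), (z12 9)); ((z3 0), (z12 10)); ((z3 1), (z12 1)); ((z3 1), (z12 4)); ((z3 1), (z12 5)); ((z3 1), (z12 6)); ((z3 1), (z12 7)); ((z3 1), (z12 8)); ((z3 1), (z12 9)); ((z3 1), (z12 10)); ((z3 1), (z12 11)); ((z3 2), (z12 2)); ((z3 2), (z12 3)); ((z3 2), (z12 4)); ((z3 2), (z12 6)); ((z3 2), (z12 8)); ((z3 2), (z12 11))].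
Definition S1_z3q12 : seq ('Z_3 * Q12) := [:: ((z3 0), (q12 0 false)); ((z3 1), (q12 0 false)); ((z3 2), (q12 0 false))].
Definition S2_z3q12 : seq ('Z_3 * Q12) := [:: ((z3 0), (q12 1 false)); ((z3 0), (q12 3 false)); ((z3 0), (q12 5 false)); ((z3 0), (q12 0 true)); ((z3 0), (q12 1 true)); ((z3 1), (q12 2 true)); ((z3 1), (q12 5 true)); ((z3 2), (q12 3 true)); ((z3 2), (q12 4 true))].
Definition S3_z3q12 : seq ('Z_3 * Q12) := [:: ((z3 0), (q12 2 false)); ((z3 0), (q12 4 false)); ((z3 0), (q12 2 true)); ((z3 0), (q12 3 true)); ((z3 0), (q12 4 true)); ((z3 0), (q12 5 true)); ((z3 1), (q12 1 false)); ((z3 1), (q12 2 false)); ((z3 1), (q12 3 false)); ((z3 1), (q12 4 false)); ((z3 1), (q12 5 false)); ((z3 1), (q12 0 true)); ((z3 1), (q12 1 true)); ((z3 1), (q12 3 true)); ((z3 1), (q12 4 true)); ((z3 2), (q12 1 false)); ((z3 2), (q12 2 false)); ((z3 2), (q12 3 false)); ((z3 2), (q12 4 false)); ((z3 2), (q12 5 false)); ((z3 2), (q12 0 true)); ((z3 2), (q12 1 true)); ((z3 2), (q12 2 true)); ((z3 2), (q12 5 true))].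
Definition S1_d6d6 : seq (D6 * D6) := [:: ((d6 0 false), (d6 0 false)); ((d6 1 false), (d6 0 false)); ((d6 2 false), (d6 0 false))].
Definition S2_d6d6 : seq (D6 * D6) := [:: ((d6 0 false), (d6 0 true)); ((d6 1 false), (d6 2 true)); ((d6 2 false), (d6 1 true)); ((d6 0 true), (d6 1 false)); ((d6 1 true), (d6 2 false)); ((d6 1 true), (d6 0 true)); ((d6 1 true), (d6 1 true)); ((d6 1 true), (d6 2 true)); ((d6 2 true), (d6 0 false))].
Definition S3_d6d6 : seq (D6 * D6) := [:: ((d6 0 false), (d6 1 false)); ((d6 0 false), (d6 2 false)); ((d6 0 false), (d6 1 true)); ((d6 0 false), (d6 2 true)); ((d6 1 false), (d6 1 false)); ((d6 1 false), (d6 2 false)); ((d6 1 false), (d6 0 true)); ((d6 1 false), (d6 1 true)); ((d6 2 false), (d6 1 false)); ((d6 2 false), (d6 2 false)); ((d6 2 false), (d6 0 true)); ((d6 2 false), (d6 2 true)); ((d6 0 true), (d6 0 false)); ((d6 0 true), (d6 2 false)); ((d6 0 true), (d6 0 true)); ((d6 0 true), (d6 1 true)); ((d6 0 true), (d6 2 true)); ((d6 1 true), (d6 0 false)); ((d6 1 true), (d6 1 false)); ((d6 2 true), (d6 1 false)); ((d6 2 true), (d6 2 false)); ((d6 2 true), (d6 0 true)); ((d6 2 true), (d6 1 true)); ((d6 2 true), (d6 2 true))].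
Definition S1_z6d6 : seq ('Z_6 * D6) := [:: ((z6 0), (d6 0 false)); ((z6 2), (d6 0 false)); ((z6 4), (d6 0 false))].
Definition S2_z6d6 : seq ('Z_6 * D6) := [:: ((z6 0), (d6 1 true)); ((z6 1), (d6 2 true)); ((z6 2), (d6 2 true)); ((z6 3), (d6 1 true)); ((z6 4), (d6 0 true)); ((z6 5), (d6 0 false)); ((z6 5), (d6 1 false)); ((z6 5), (d6 2 false)); ((z6 5), (d6 0 true))].
Definition S3_z6d6 : seq ('Z_6 * D6) := [:: ((z6 0), (d6 1 false)); ((z6 0), (d6 2 false)); ((z6 0), (d6 0 true)); ((z6 0), (d6 2 true)); ((z6 1), (d6 0 false)); ((z6 1), (d6 1 false)); ((z6 1), (d6 2 false)); ((z6 1), (d6 0 true)); ((z6 1), (d6 1 true)); ((z6 2), (d6 1 false)); ((z6 2), (d6 2 false)); ((z6 2), (d6 0 true)); ((z6 2), (d6 1 true)); ((z6 3), (d6 0 false)); ((z6 3), (d6 1 false)); ((z6 3), (d6 2 false)); ((z6 3), (d6 0 true)); ((z6 3), (d6 2 true)); ((z6 4), (d6 1 false)); ((z6 4), (d6 2 false)); ((z6 4), (d6 1 true)); ((z6 4), (d6 2 true)); ((z6 5), (d6 1 true)); ((z6 5), (d6 2 true))].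
Definition L_z6z6 : seq ('Z_6 * 'Z_6) := [seq (a, b) | a <- L6, b <- L6].
Lemma ex_z6z6 : exists F, is_hadamard_pdf [set: 'Z_6 * 'Z_6]%G [:: 3; 9; 24] 18 F.
Proof.
eexists; apply: (@checkP _ L_z6z6 _ (allP2 cL6 cL6) S1_z6z6 S2_z6z6 S3_z6z6).
  by vm_compute.
by vm_compute.
Qed.
Definition L_z3z12 : seq ('Z_3 * 'Z_12) := [seq (a, b) | a <- L3, b <- L12].
Lemma ex_z3z12 : exists F, is_hadamard_pdf [set: 'Z_3 * 'Z_12]%G [:: 3; 9; 24] 18 F.
Proof.
eexists; apply: (@checkP _ L_z3z12 _ (allP2 cL3 cL12) S1_z3z12 S2_z3z12 S3_z3z12).
  by vm_compute.
by vm_compute.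
Qed.
Definition L_z3q12 : seq ('Z_3 * Q12) := [seq (a, b) | a <- L3, b <- LQ12].
Lemma ex_z3q12 : exists F, is_hadamard_pdf [set: 'Z_3 * Q12]%G [:: 3; 9; 24] 18 F.
Proof.
eexists; apply: (@checkP _ L_z3q12 _ (allP2 cL3 cLQ12) S1_z3q12 S2_z3q12 S3_z3q12).
  by vm_compute.
by vm_compute.
Qed.
Definition L_d6d6 : seq (D6 * D6) := [seq (a, b) | a <- LD6, b <- LD6].
Lemma ex_d6d6 : exists F, is_hadamard_pdf [set: D6 * D6]%G [:: 3; 9; 24] 18 F.
Proof.
eexists; apply: (@checkP _ L_d6d6 _ (allP2 cLD6 cLD6) S1_d6d6 S2_d6d6 S3_d6d6).
  by vm_compute.
by vm_compute.
Qed.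
Definition L_z6d6 : seq ('Z_6 * D6) := [seq (a, b) | a <- L6, b <- LD6].
Lemma ex_z6d6 : exists F, is_hadamard_pdf [set: 'Z_6 * D6]%G [:: 3; 9; 24] 18 F.
Proof.
eexists; apply: (@checkP _ L_z6d6 _ (allP2 cL6 cLD6) S1_z6d6 S2_z6d6 S3_z6d6).
  by vm_compute.
by vm_compute.
Qed.
Local Close Scope group_scope.

Theorem mainTheorem11 :
  [/\ exists F, is_hadamard_pdf [set: 'Z_6 * 'Z_6]%G [:: 3; 9; 24] 18 F,
      exists F, is_hadamard_pdf [set: 'Z_3 * 'Z_12]%G [:: 3; 9; 24] 18 F,
      exists F, is_hadamard_pdf [set: 'Z_3 * Q12]%G [:: 3; 9; 24] 18 F,
      exists F, is_hadamard_pdf [set: D6 * D6]%G [:: 3; 9; 24] 18 F &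
      exists F, is_hadamard_pdf [set: 'Z_6 * D6]%G [:: 3; 9; 24] 18 F].
Proof. split; [exact: ex_z6z6 | exact: ex_z3z12 | exact: ex_z3q12 | exact: ex_d6d6 | exact: ex_z6d6]. Qed.
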